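(* There exists a $5$-ary $2$-frameproof code of length $4$ and cardinality $32$ satisfying Property $P(2)$.
   Context: For $P\subseteq F^l$ over a finite alphabet $F$, $desc(P)=\{x\in F^l: \text{for every } i \text{ there is } y\in P \text{ with } x_i=y_i\}$. For an integer $c\geq 2$, a $c$-frameproof code is a subset $C\subseteq F^l$ with $desc(P)\cap C=P$ for every $P\subseteq C$ with $|P|\leq c$; it is $q$-ary if $|F|=q$. A $c$-frameproof code $C$ over an alphabet $S$ satisfies Property $P(t)$ if there is a special element $\infty\in S$ such that every codeword has at most $t-1$ coordinates equal to $\infty$ and any two codewords that agree in $t$ coordinates where their common value is not $\infty$ are equal. *)

(* Defs.v *)
From mathcomp Require Import all_boot.
Set Implicit Arguments. Unset Strict Implicit. Unset Printing Implicit Defensive.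

Definition word (F : finType) (l : nat) := {ffun 'I_l -> F}.

Definition desc (F : finType) (l : nat) (P : {set word F l}) : {set word F l} :=
  [set x : word F l | [forall i : 'I_l, [exists y in P, x i == y i]]].

Definition frameproof (F : finType) (l c : nat) (C : {set word F l}) : Prop :=
  forall P : {set word F l}, P \subset C -> #|P| <= c -> desc P :&: C = P.

Definition propertyP (F : finType) (l t : nat) (C : {set word F l}) : Prop :=
  exists inf : F,
    (forall x, x \in C -> #|[set i : 'I_l | x i == inf]| <= t - 1) /\
    (forall x y, x \in C -> y \in C ->
       t <= #|[set i : 'I_l | (x i == y i) && (x i != inf)]| -> x = y).

(* Main.v *)
Require Import Defs.
From mathcomp Require Import all_boot.
From Stdlib Require Import Lia.
From mathcomp Require Import zify.

Lemma card_set_count (T : finType) (P : pred T) : #|[set i | P i]| = count P (enum T).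
Proof. by rewrite cardsE cardE enumT /enum_mem size_filter. Qed.

Lemma fp_of_P2 (C : {set word 'I_5 4}) (inf : 'I_5) :
  (forall x, x \in C -> #|[set i : 'I_4 | x i == inf]| <= 1) ->
  (forall x y, x \in C -> y \in C ->
     2 <= #|[set i : 'I_4 | (x i == y i) && (x i != inf)]| -> x = y) ->
  frameproof 2 C.
Proof.
move=> A1 A2 P sPC cP.
apply/setP => c; rewrite inE.
case cinP: (c \in P).
  rewrite (subsetP sPC _ cinP) andbT inE.
  by apply/forallP => i; apply/existsP; exists c; rewrite cinP eqxx.
apply/negbTE/negP => /andP [cD cC].
move: cD; rewrite inE => /forallP cD.
pose f (i : 'I_4) := odflt c [pick y in P | c i == y i].
have fP : forall i, (f i \in P) && (c i == f i i).
  move=> i; rewrite /f; case: pickP => [y /andP [-> ->] //|H].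
  by have /existsP [y /andP [yP E]] := cD i; have := H y; rewrite yP E.
pose S := ~: [set i : 'I_4 | c i == inf].
have cS : 3 <= #|S|.
  have := cardsC [set i : 'I_4 | c i == inf]; rewrite card_ord -/S.
  by have := A1 c cC; lia.
case: (boolP [exists i in S, exists j in S, (i != j) && (f i == f j)]).
  move=> /existsP [i /andP [iS /existsP [j /andP [jS /andP [ij /eqP fij]]]]].
  have /andP [yP ei] := fP i; have /andP [_ ej] := fP j.
  rewrite -fij in ej.
  have : c = f i.
    apply: A2 => //; first exact: (subsetP sPC).
    apply: (@leq_trans #|[set i; j]|); first by rewrite cards2 ij.
    apply: subset_leq_card; apply/subsetP => k; rewrite !inE.
    move: iS jS; rewrite !inE => iS jS.
    by case/orP => /eqP ->; rewrite ?ei ?ej ?iS ?jS.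
  by move=> E; move: cinP; rewrite E yP.
move=> /negP nex.
have inj : {in S &, injective f}.
  move=> i j iS jS fij; apply/eqP; apply/negPn/negP => ij; apply: nex.
  by apply/existsP; exists i; rewrite iS; apply/existsP; exists j; rewrite jS ij fij eqxx.
have := card_in_imset inj.
have : f @: S \subset P.
  by apply/subsetP => y /imsetP [i _ ->]; have /andP [] := fP i.
move=> /subset_leq_card; lia.
Qed.

Definition enc (l : seq nat) : word 'I_5 4 := [ffun i : 'I_4 => inord (nth 0 l i)].
Definition Lcode : seq (seq nat) := [:: [::0;0;0;4]; [::0;1;4;0]; [::0;2;1;4]; [::0;3;4;1]; [::0;4;2;2]; [::0;4;3;3]; [::1;1;2;4]; [::2;1;3;4]; [::3;1;4;1]; [::4;1;0;2]; [::4;1;1;3]; [::1;4;0;1]; [::2;4;1;1]; [::4;0;2;1]; [::4;2;3;1]; [::1;2;4;2]; [::1;0;4;3]; [::2;0;4;2]; [::1;3;1;4]; [::1;4;3;0]; [::3;0;3;4]; [::4;0;1;0]; [::3;4;1;2]; [::4;3;3;2]; [::2;2;0;4]; [::2;3;4;0]; [::2;4;2;3]; [::3;3;2;4]; [::4;2;2;0]; [::3;2;4;3]; [::3;4;0;0]; [::4;3;0;3]].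
Definition code := map enc Lcode.
Definition infc : 'I_5 := inord 4.

Lemma L_ok : all (fun l => (size l == 4) && all (fun k => k < 5) l) Lcode.
Proof. by []. Qed.
Lemma L_uniq : uniq Lcode.
Proof. by []. Qed.
Lemma L_A1 : all (fun l => count (fun k => nth 0 l k == 4) (iota 0 4) <= 1) Lcode.
Proof. by []. Qed.
Lemma L_A2 : all (fun l => all (fun m =>
   (2 <= count (fun k => (nth 0 l k == nth 0 m k) && (nth 0 l k != 4)) (iota 0 4)) ==> (l == m)) Lcode) Lcode.
Proof. by vm_compute. Qed.

Lemma encE l (i : 'I_4) : all (fun k => k < 5) l -> nat_of_ord (enc l i) = nth 0 l i.
Proof.
move=> Hl; rewrite /enc ffunE /= inordK //.
case: (ltnP i (size l)) => H; first by apply: (allP Hl); exact: mem_nth.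
by rewrite nth_default.
Qed.

Lemma infcE : nat_of_ord infc = 4.
Proof. by rewrite inordK. Qed.

Lemma count_ord4 (P : pred nat) : count (fun i : 'I_4 => P (val i)) (enum 'I_4) = count P (iota 0 4).
Proof. by rewrite -val_enum_ord count_map. Qed.

Lemma in_code x : x \in code -> exists2 l, l \in Lcode & x = enc l.
Proof. by move/mapP. Qed.

Lemma L_okP l : l \in Lcode -> (size l = 4) /\ all (fun k => k < 5) l.
Proof. by move=> H; have /andP [/eqP -> ->] := allP L_ok l H. Qed.

Lemma enc_inj : {in Lcode &, injective enc}.
Proof.
move=> l m /L_okP [sl al] /L_okP [sm am] E.
apply: (@eq_from_nth _ 0); first by rewrite sl sm.
move=> k; rewrite sl => kl.
by rewrite -(@encE l (Ordinal kl) al) -(@encE m (Ordinal kl) am) E.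
Qed.

Lemma code_uniq : uniq code.
Proof. by rewrite map_inj_in_uniq ?L_uniq //; exact: enc_inj. Qed.

Theorem lemma3 :
  exists C : {set word 'I_5 4},
    #|C| = 32 /\ frameproof 2 C /\ propertyP 2 C.
Proof.
pose C := [set x in code].
have A1 : forall x, x \in C -> #|[set i : 'I_4 | x i == infc]| <= 1.
  move=> x; rewrite inE card_set_count => /in_code [l lL ->].
  have [_ al] := @L_okP l lL.
  rewrite (eq_count (a2 := fun i : 'I_4 => nth 0 l (val i) == 4)); last first.
    by move=> i /=; rewrite -val_eqE /= encE // infcE.
  by rewrite (count_ord4 (fun k => nth 0 l k == 4)); exact: (allP L_A1 l lL).
have A2 : forall x y, x \in C -> y \in C ->
     2 <= #|[set i : 'I_4 | (x i == y i) && (x i != infc)]| -> x = y.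
  move=> x y; rewrite inE => xs; rewrite inE => ys; rewrite card_set_count => H.
  have [l lL Ex] := @in_code x xs; have [m mL Ey] := @in_code y ys; subst x y.
  have [_ al] := @L_okP l lL; have [_ am] := @L_okP m mL.
  move: H; rewrite (eq_count (a2 := fun i : 'I_4 =>
     (nth 0 l (val i) == nth 0 m (val i)) && (nth 0 l (val i) != 4))); last first.
    by move=> i /=; rewrite -!val_eqE /= !encE // infcE.
  rewrite (count_ord4 (fun k => (nth 0 l k == nth 0 m k) && (nth 0 l k != 4))) => H.
  by move: (allP (allP L_A2 l lL) m mL); rewrite H => /eqP ->.
exists C; split; last split.
- by rewrite cardsE (card_uniqP code_uniq) size_map.
- exact: fp_of_P2 A1 A2.
- by exists infc; split.
Qed.
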